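(* Let $J$ be a real symmetric $n\times n$ matrix with pairwise distinct eigenvalues, and consider the Euler–Arnold equations $$\dot M = [M,\Omega],\qquad M = \Omega J + J\Omega,$$ where $M\in\mathfrak{so}(n)$ and $\Omega\in\mathfrak{so}(n)$ is the unique skew-symmetric matrix with $\Omega J + J\Omega = M$. Then $M$ is an equilibrium point of this system if and only if there exists an orthonormal basis of $\mathbb{R}^n$ in which $J$ is diagonal and $\Omega$ is block-diagonal of the form $$\Omega = \operatorname{diag}\bigl(\omega_1 A_1,\ \dots,\ \omega_k A_k,\ 0,\ \dots,\ 0\bigr),$$ where, for each $i=1,\dots,k$, $A_i\in \mathfrak{so}(2m_i)\cap \mathrm{SO}(2m_i)$ for some integer $m_i>0$, and $\omega_1,\dots,\omega_k$ are pairwise distinct positive real numbers. Moreover, this form of $\Omega$ is unique up to a permutation of the blocks.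
   Context: $\mathfrak{so}(m)$ denotes the space of real skew-symmetric $m\times m$ matrices and $\mathrm{SO}(m)$ the group of real orthogonal $m\times m$ matrices of determinant $1$; $[X,Y]=XY-YX$. The linear map $\Omega\mapsto \Omega J + J\Omega$ is invertible on $\mathfrak{so}(n)$, so $\Omega$ is determined by $M$. An equilibrium point means a point $M$ with $[M,\Omega]=0$. In the block form, the trailing zero entries form a zero block (possibly empty), and $k\ge 0$. *)

(* Defs.v *)
From HB Require Import structures.
From mathcomp Require Import all_boot all_order all_algebra.
From mathcomp Require Import reals.
Set Implicit Arguments. Unset Strict Implicit. Unset Printing Implicit Defensive.
Import Order.TTheory GRing.Theory Num.Theory.
Local Open Scope ring_scope.

Section Defs.
Variable R : realType.

Definition lie_bracket n (X Y : 'M[R]_n) : 'M[R]_n := X *m Y - Y *m X.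

Definition skew_mx n (X : 'M[R]_n) : Prop := X^T = - X.
Definition symmetric_mx n (X : 'M[R]_n) : Prop := X^T = X.
Definition orthogonal_mx n (P : 'M[R]_n) : Prop := P^T *m P = 1%:M.
Definition special_orthogonal n (X : 'M[R]_n) : Prop :=
  orthogonal_mx X /\ \det X = 1.

(* J has pairwise distinct eigenvalues: n distinct eigenvalues (each of
   algebraic multiplicity one) *)
Definition distinct_eigenvalues n (J : 'M[R]_n) : Prop :=
  exists d : 'I_n -> R, injective d /\ forall i, eigenvalue J (d i).

Definition block_form n k (m : 'I_k -> nat) (w : 'I_k -> R)
    (A : forall i : 'I_k, 'M[R]_((m i).*2)) z
    (e : (\sum_(i < k) (m i).*2 + z)%N = n) : 'M[R]_n :=
  castmx (e, e) (block_mx (\mxdiag_(i < k) (w i *: A i)) 0 0 (0 : 'M[R]_z)).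

Definition normal_form n (J Om : 'M[R]_n) k (m : 'I_k -> nat) (w : 'I_k -> R)
  : Prop :=
  exists (A : forall i : 'I_k, 'M[R]_((m i).*2)) (z : nat)
         (e : (\sum_(i < k) (m i).*2 + z)%N = n) (P : 'M[R]_n),
    orthogonal_mx P /\
    is_diag_mx (P^T *m J *m P) /\
    (forall i, 0 < m i)%N /\
    (forall i, 0 < w i) /\
    injective w /\
    (forall i, skew_mx (A i) /\ special_orthogonal (A i)) /\
    P^T *m Om *m P = block_form w A e.

End Defs.

(* Main.v *)
Require Import Defs.
From HB Require Import structures.
From mathcomp Require Import all_boot all_order all_algebra all_fingroup.
From mathcomp Require Import reals.
From mathcomp Require Import ring lra zify.
From Stdlib Require Import FunctionalExtensionality.
Set Implicit Arguments. Unset Strict Implicit. Unset Printing Implicit Defensive.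
Import Order.TTheory GRing.Theory Num.Theory.
Local Open Scope ring_scope.

Section Ext.
Variable R : realType.

Definition ext p q (X : 'M[R]_(p,q)) (a b : nat) : R :=
  match (insub a : option 'I_p), (insub b : option 'I_q) with
  | Some i, Some j => X i j | _, _ => 0 end.

Lemma extE p q (X : 'M[R]_(p,q)) (i : 'I_p) (j : 'I_q) : ext X i j = X i j.
Proof. by rewrite /ext !valK. Qed.

Lemma ext_outl p q (X : 'M[R]_(p,q)) a b : (p <= a)%N -> ext X a b = 0.
Proof. by move=> h; rewrite /ext insubF // ltnNge h. Qed.

Lemma ext_outr p q (X : 'M[R]_(p,q)) a b : (q <= b)%N -> ext X a b = 0.
Proof. by move=> h; rewrite /ext; case: (insub a) => // i; rewrite insubF // ltnNge h. Qed.

Lemma ext_inj p q (X Y : 'M[R]_(p,q)) : ext X = ext Y -> X = Y.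
Proof. by move=> h; apply/matrixP => i j; rewrite -!extE h. Qed.

Lemma ext_mx p q (f : nat -> nat -> R) a b :
  ext (\matrix_(i < p, j < q) f i j) a b = if (a < p)%N && (b < q)%N then f a b else 0.
Proof.
case: (ltnP a p) => ha; last by rewrite ext_outl.
case: (ltnP b q) => hb; last by rewrite ext_outr.
by rewrite -[a]/(nat_of_ord (Ordinal ha)) -[b]/(nat_of_ord (Ordinal hb)) extE mxE.
Qed.

Lemma ext0 p q a b : ext (0 : 'M[R]_(p,q)) a b = 0.
Proof.
case: (ltnP a p) => ha; last by rewrite ext_outl.
case: (ltnP b q) => hb; last by rewrite ext_outr.
by rewrite -[a]/(nat_of_ord (Ordinal ha)) -[b]/(nat_of_ord (Ordinal hb)) extE mxE.
Qed.

Lemma ext_gen p q (X : 'M[R]_(p,q)) (P : nat -> nat -> R -> Prop) :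
  (forall a b, P a b 0) -> (forall (i : 'I_p) (j : 'I_q), P i j (X i j)) ->
  forall a b, P a b (ext X a b).
Proof.
move=> h0 h a b.
case: (ltnP a p) => ha; last by rewrite ext_outl.
case: (ltnP b q) => hb; last by rewrite ext_outr.
by rewrite -[a]/(nat_of_ord (Ordinal ha)) -[b]/(nat_of_ord (Ordinal hb)) extE.
Qed.

Lemma ext_castmx p q p' q' (e : (p = p') * (q = q')) (X : 'M[R]_(p,q)) :
  ext (castmx e X) = ext X.
Proof. by case: e => e1 e2; case: p' / e1; case: q' / e2; rewrite castmx_id. Qed.

Lemma ext_tr p q (X : 'M[R]_(p,q)) a b : ext X^T a b = ext X b a.
Proof.
case: (ltnP a q) => ha; last by rewrite ext_outl // ext_outr.
case: (ltnP b p) => hb; last by rewrite ext_outr // ext_outl.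
by rewrite -[a]/(nat_of_ord (Ordinal ha)) -[b]/(nat_of_ord (Ordinal hb)) !extE mxE.
Qed.

Lemma ext_lin p q (c : R) (X Y : 'M[R]_(p,q)) a b :
  ext (c *: X + Y) a b = c * ext X a b + ext Y a b.
Proof.
case: (ltnP a p) => ha; first last.
  by rewrite !ext_outl // mulr0 addr0.
case: (ltnP b q) => hb; first last.
  by rewrite !ext_outr // mulr0 addr0.
by rewrite -[a]/(nat_of_ord (Ordinal ha)) -[b]/(nat_of_ord (Ordinal hb)) !extE !mxE.
Qed.

Lemma extZ p q (c : R) (X : 'M[R]_(p,q)) a b : ext (c *: X) a b = c * ext X a b.
Proof. by rewrite -[c *: X]addr0 ext_lin ext0 addr0. Qed.

Lemma extN p q (X : 'M[R]_(p,q)) a b : ext (- X) a b = - ext X a b.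
Proof. by rewrite -scaleN1r extZ mulN1r. Qed.

Lemma ext_block m1 m2 n1 n2 (A : 'M[R]_(m1,n1)) (B : 'M[R]_(m1,n2))
   (C : 'M[R]_(m2,n1)) (D : 'M[R]_(m2,n2)) a b :
  ext (block_mx A B C D) a b =
  if (a < m1)%N then (if (b < n1)%N then ext A a b else ext B a (b - n1))
  else (if (b < n1)%N then ext C (a - m1) b else ext D (a - m1) (b - n1)).
Proof.
case: (ltnP a (m1 + m2)) => ha; first last.
  rewrite ext_outl //; case: ifP => h1; first by move: ha; rewrite leqNgt ltn_addr.
  by case: ifP => _; rewrite ext_outl // leq_subRL ?ha // leqNgt h1.
case: (ltnP b (n1 + n2)) => hb; first last.
  rewrite ext_outr //; case: ifP => h1; last first.
    by case: ifP => h2; [move: hb; rewrite leqNgt ltn_addr|rewrite ext_outr // leq_subRL ?hb // leqNgt h2].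
  by case: ifP => h2; [move: hb; rewrite leqNgt ltn_addr|rewrite ext_outr // leq_subRL ?hb // leqNgt h2].
rewrite -[a]/(nat_of_ord (Ordinal ha)) -[b]/(nat_of_ord (Ordinal hb)) extE.
set i := Ordinal ha; set j := Ordinal hb.
case: (splitP i) => i' ei; case: (splitP j) => j' ej.
- have -> : i = lshift m2 i' by apply: val_inj.
  have -> : j = lshift n2 j' by apply: val_inj.
  by rewrite block_mxEul /= extE.
- have -> : i = lshift m2 i' by apply: val_inj.
  have -> : j = rshift n1 j' by apply: val_inj.
  by rewrite block_mxEur /= addKn extE.
- have -> : i = rshift m1 i' by apply: val_inj.
  have -> : j = lshift n2 j' by apply: val_inj.
  by rewrite block_mxEdl /= addKn extE.
- have -> : i = rshift m1 i' by apply: val_inj.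
  have -> : j = rshift n1 j' by apply: val_inj.
  by rewrite block_mxEdr /= !addKn extE.
Qed.

Definition dblk (s : nat) (f g : nat -> nat -> R) a b :=
  if (a < s)%N then (if (b < s)%N then f a b else 0)
  else (if (b < s)%N then 0 else g (a - s)%N (b - s)%N).

Lemma ext_dblock m1 m2 (A : 'M[R]_m1) (D : 'M[R]_m2) :
  ext (block_mx A 0 0 D) = dblk m1 (ext A) (ext D).
Proof.
apply: functional_extensionality => a; apply: functional_extensionality => b.
by rewrite ext_block /dblk !ext0.
Qed.

Lemma dblkA s1 s2 f g h :
  dblk s1 f (dblk s2 g h) = dblk (s1 + s2) (dblk s1 f g) h.
Proof.
apply: functional_extensionality => a; apply: functional_extensionality => b.
rewrite /dblk.
do ! case: ifP => ?; try lia; try done.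
by rewrite !subnDA.
Qed.

Lemma dblk0 s : dblk s (fun (_ _ : nat) => (0:R)) (fun (_ _ : nat) => (0:R)) = (fun (_ _ : nat) => (0:R)).
Proof.
apply: functional_extensionality => a; apply: functional_extensionality => b.
rewrite /dblk; by do ! case: ifP => _.
Qed.

Lemma ext0f p q : ext (0 : 'M[R]_(p,q)) = (fun (_ _ : nat) => (0:R)).
Proof.
by apply: functional_extensionality => a; apply: functional_extensionality => b; rewrite ext0.
Qed.

Lemma ext_mxdiag0 (p : 'I_0 -> nat) (B : forall i, 'M[R]_(p i)) :
  ext (\mxdiag_i B i) = (fun (_ _ : nat) => (0:R)).
Proof.
apply: functional_extensionality => a; apply: functional_extensionality => b.
by rewrite ext_outl // big_ord0.
Qed.

Lemma ext_mxdiag_recl k (p : 'I_k.+1 -> nat) (B : forall i, 'M[R]_(p i)) :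
  ext (\mxdiag_i B i) = dblk (p ord0) (ext (B ord0)) (ext (\mxdiag_i B (lift ord0 i))).
Proof. by rewrite mxdiag_recl ext_castmx ext_dblock. Qed.

Lemma ext_mxdiag_eq k (p p' : 'I_k -> nat) (B : forall i, 'M[R]_(p i))
   (B' : forall i, 'M[R]_(p' i)) :
  (forall i, p i = p' i) -> (forall i, ext (B i) = ext (B' i)) ->
  ext (\mxdiag_i B i) = ext (\mxdiag_i B' i).
Proof.
elim: k p p' B B' => [|k IH] p p' B B' hp hB; first by rewrite !ext_mxdiag0.
rewrite !ext_mxdiag_recl; congr dblk; first exact: hp; first exact: hB.
by apply: IH => i; rewrite ?hp ?hB.
Qed.

Lemma mx_ext_cast p q (e : q = p) (Y : 'M[R]_q) :
  \matrix_(a < p, b < p) ext Y a b = castmx (e, e) Y.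
Proof. by case: p / e; apply/matrixP => i j; rewrite mxE extE castmx_id. Qed.

Lemma ext_mx_ext p q (e : q = p) (Y : 'M[R]_q) :
  ext (\matrix_(a < p, b < p) ext Y a b) = ext Y.
Proof. by rewrite (mx_ext_cast e) ext_castmx. Qed.

End Ext.

Section LinAlg.
Variable R : realType.

Lemma castmx_mul p q (e : p = q) (X Y : 'M[R]_p) :
  castmx (e,e) X *m castmx (e,e) Y = castmx (e,e) (X *m Y).
Proof. by case: q / e; rewrite !castmx_id. Qed.

Lemma skew_castmx p q (e : p = q) (X : 'M[R]_p) :
  skew_mx X -> skew_mx (castmx (e,e) X).
Proof. by case: q / e; rewrite castmx_id. Qed.

Lemma so_castmx p q (e : p = q) (X : 'M[R]_p) :
  special_orthogonal X -> special_orthogonal (castmx (e,e) X).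
Proof. by case: q / e; rewrite castmx_id. Qed.

Lemma mulmx_diagr n (X D : 'M[R]_n) i j : is_diag_mx D -> (X *m D) i j = X i j * D j j.
Proof.
move=> /is_diag_mxP hD; rewrite mxE (bigD1 j) //= big1 ?addr0 // => l hl.
by rewrite hD ?mulr0.
Qed.

Lemma mulmx_diagl n (X D : 'M[R]_n) i j : is_diag_mx D -> (D *m X) i j = D i i * X i j.
Proof.
move=> /is_diag_mxP hD; rewrite mxE (bigD1 i) //= big1 ?addr0 // => l hl.
by rewrite hD ?mul0r // eq_sym.
Qed.

Lemma skew_sqN1 p (A : 'M[R]_p) : A^T = - A -> A *m A = - (1%:M) ->
  special_orthogonal A /\ ~~ odd p.
Proof.
move=> hT hA.
have orth : A^T *m A = 1%:M by rewrite hT mulNmx hA (opprK (1%:M : 'M[R]_p)).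
have h1 : (1%:M - A) *m (1%:M + A) = 2%:M.
  rewrite mulmxDr !mulmxBl !mul1mx mulmx1 hA.
  by rewrite addrA subrK (opprK (1%:M : 'M[R]_p)) -raddfD.
have hd : \det (1%:M - A) != 0.
  apply/negP => /eqP h0; move: (congr1 determinant h1).
  rewrite det_mulmx h0 mul0r det_scalar => /eqP; rewrite eq_sym expf_eq0.
  by rewrite pnatr_eq0 andbF.
have h2 : A *m (1%:M - A) = 1%:M + A by rewrite mulmxBr mulmx1 hA (opprK (1%:M : 'M[R]_p)) addrC.
have h3 : (1%:M - A)^T = 1%:M + A by rewrite linearB /= trmx1 hT (opprK A).
have hdet : \det A = 1.
  apply: (mulIf hd); rewrite mul1r -det_mulmx h2 -h3 det_tr //.
split; first by split.
apply/negP => hodd.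
move: (det_tr A); rewrite hT -scaleN1r detZ hdet mulr1 -signr_odd hodd expr1 => h.
have h' : (-1 : R) = 1 := h. clear -h'. lra.
Qed.

End LinAlg.

Definition ocons {T : Type} k (x : T) (f : 'I_k -> T) (i : 'I_k.+1) : T :=
  if unlift ord0 i is Some j then f j else x.

Lemma ocons0 {T : Type} k (x : T) (f : 'I_k -> T) : ocons x f ord0 = x.
Proof. by rewrite /ocons unlift_none. Qed.

Lemma oconsS {T : Type} k (x : T) (f : 'I_k -> T) j : ocons x f (lift ord0 j) = f j.
Proof. by rewrite /ocons liftK. Qed.

Lemma I0_all (P : 'I_0 -> Prop) : forall i, P i.
Proof. by case=> m hm; exfalso; move: hm; rewrite ltn0. Qed.

Section Core.
Variable R : realType.

Definition good k (m : 'I_k -> nat) (w : 'I_k -> R)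
  (A : forall i, 'M[R]_((m i).*2)) : Prop :=
  (forall i, 0 < m i)%N /\ (forall i, 0 < w i) /\ injective w /\
  (forall i, skew_mx (A i) /\ special_orthogonal (A i)).

Lemma ext_block_form n k (m : 'I_k -> nat) (w : 'I_k -> R)
  (A : forall i, 'M[R]_((m i).*2)) z (e : (\sum_(i < k) (m i).*2 + z)%N = n) :
  ext (block_form w A e) =
  dblk (\sum_(i < k) (m i).*2) (ext (\mxdiag_i (w i *: A i))) (fun (_ _ : nat) => (0:R)).
Proof. by rewrite /block_form ext_castmx ext_dblock ext0f. Qed.

Lemma ext_skew n (T : 'M[R]_n) : T^T = - T -> forall a b, ext T b a = - ext T a b.
Proof. by move=> hT a b; rewrite -ext_tr hT extN. Qed.

Lemma ext_diag n (N : 'M[R]_n) : is_diag_mx N -> forall a b, a != b -> ext N a b = 0.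
Proof.
move=> /is_diag_mxP hN.
by apply: (ext_gen (P := fun a b x => a != b -> x = 0)) => // i j hij; apply: hN.
Qed.

Lemma ext_sq_le0 n (T : 'M[R]_n) : T^T = - T -> forall a, ext (T *m T) a a <= 0.
Proof.
move=> hT a; suff: forall a b, a = b -> ext (T *m T) a b <= 0 by apply.
apply: (ext_gen (P := fun a b x => a = b -> x <= 0)) => // i j.
move=> /val_inj <-; rewrite mxE -oppr_ge0 -sumrN; apply: sumr_ge0 => l _.
have -> : T l i = - T i l by have := congr1 (fun M : 'M[R]_n => M i l) hT; rewrite !mxE.
by rewrite mulrN opprK -expr2 sqr_ge0.
Qed.

Lemma sq_zero n (T : 'M[R]_n) : T^T = - T -> (forall i, (T *m T) i i = 0) -> T = 0.
Proof.
move=> hT h; apply/matrixP => i l; rewrite mxE.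
have hs : \sum_l (T i l) ^+ 2 = 0.
  have : (T *m T) i i = - \sum_l T i l ^+ 2.
    rewrite mxE -sumrN; apply: eq_bigr => j _.
    have -> : T j i = - T i j by have := congr1 (fun M : 'M[R]_n => M i j) hT; rewrite !mxE.
    by rewrite mulrN expr2.
  by rewrite h => /eqP; rewrite eq_sym oppr_eq0 => /eqP.
have := psumr_eq0P (P := predT) (fun j _ => sqr_ge0 (T i j)) hs (i := l) isT.
by move/eqP; rewrite sqrf_eq0 => /eqP.
Qed.

Lemma Eprime n (T : 'M[R]_n) : T^T = - T -> is_diag_mx (T *m T) ->
  (forall a b, (a <= b)%N -> (b < n)%N -> ext (T *m T) a a <= ext (T *m T) b b) ->
  exists k (m : 'I_k -> nat) (w : 'I_k -> R) (A : forall i, 'M[R]_((m i).*2)) z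
    (e : (\sum_(i < k) (m i).*2 + z)%N = n),
   good w A /\ (forall i, exists a, (a < n)%N /\ - (w i ^+ 2) = ext (T *m T) a a)
   /\ T = block_form w A e.
Proof.
elim/ltn_ind: n T => n IH T hT hdiag hmono.
have hle0 := ext_sq_le0 hT.
have hskew := ext_skew hT.
have hND := ext_diag hdiag.
case: (eqVneq (ext (T *m T) 0 0) 0) => h00.
  have T0 : T = 0.
    apply: sq_zero => // i; rewrite -extE; apply/eqP; rewrite eq_le hle0 /= -h00.
    by apply: hmono.
  have e : (\sum_(i < 0) ((fun _ : 'I_0 => 0%N) i).*2 + n)%N = n by rewrite big_ord0.
  exists 0%N, (fun _ => 0%N), (fun _ => 0), (fun _ => 0), n, e.
  split.
    split; first exact: I0_all.
    split; first exact: I0_all.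
    split; first by move=> x; exact: I0_all.
    exact: (I0_all (fun i => skew_mx (0 : 'M[R]_((0%N).*2)) /\ special_orthogonal (0 : 'M[R]_((0%N).*2)))).
  split; first by apply: I0_all.
  by apply: ext_inj; rewrite ext_block_form ext_mxdiag0 dblk0 T0 ext0f.
have hc : 0 < - ext (T *m T) 0 0 by rewrite oppr_gt0 lt_neqAle h00 hle0.
have hn0 : (0 < n)%N.
  rewrite lt0n; apply/eqP => hn; move: h00; by rewrite ext_outl ?eqxx // hn.
pose r := find (fun a => ext (T *m T) a a != ext (T *m T) 0 0) (iota 0 n).
have hrn : (r <= n)%N by rewrite -[X in (_ <= X)%N](size_iota 0 n) find_size.
have hr0 : (0 < r)%N.
  rewrite /r (_ : iota 0 n = 0%N :: iota 1 n.-1); last by rewrite -{1}(prednK hn0).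
  by rewrite /= eqxx.
have hbef : forall a, (a < r)%N -> ext (T *m T) a a = ext (T *m T) 0 0.
  move=> a har; have := before_find 0%N har.
  rewrite nth_iota ?add0n; last by apply: leq_trans har hrn.
  by move/negbFE/eqP.
have haft : forall a, (r <= a)%N -> (a < n)%N -> ext (T *m T) 0 0 < ext (T *m T) a a.
  move=> a hra han.
  have hrlt : (r < n)%N by apply: leq_ltn_trans hra han.
  have := nth_find 0%N (a := fun a => ext (T *m T) a a != ext (T *m T) 0 0) (s := iota 0 n).
  rewrite has_find size_iota => /(_ hrlt).
  rewrite -/r nth_iota // add0n => hne.
  have h1 : ext (T *m T) 0 0 <= ext (T *m T) r r by apply: hmono.
  apply: (lt_le_trans (y := ext (T *m T) r r)); first by rewrite lt_neqAle eq_sym hne h1.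
  by apply: hmono.
have hcomm : forall i j : 'I_n, T i j * ((T *m T) j j - (T *m T) i i) = 0.
  move=> i j.
  have e1 : T *m (T *m T) = (T *m T) *m T by rewrite mulmxA.
  have := congr1 (fun M : 'M[R]_n => M i j) e1.
  rewrite /= (mulmx_diagr T i j hdiag) (mulmx_diagl T i j hdiag) => h.
  by rewrite mulrBr h mulrC subrr.
have hoff : forall a b, ext (T *m T) a a != ext (T *m T) b b -> ext T a b = 0.
  suff: forall a b, (ext (T *m T) a a != ext (T *m T) b b -> ext T a b = 0) by [].
  apply: (ext_gen (P := fun a b x => ext (T *m T) a a != ext (T *m T) b b -> x = 0)) => // i j.
  rewrite !extE => hne.
  have := hcomm i j; move/eqP; rewrite mulf_eq0 subr_eq0 [X in _ || X]eq_sym (negbTE hne) orbF.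
  by move/eqP.
have e1 : (r + (n - r))%N = n by rewrite subnKC.
pose T1 := \matrix_(a < r, b < r) ext T a b.
pose T2 := \matrix_(a < n - r, b < n - r) ext T (r + a)%N (r + b)%N.
have hTblk : ext T = dblk r (ext T1) (ext T2).
  apply: functional_extensionality => a; apply: functional_extensionality => b.
  rewrite /dblk /T1 /T2 ext_mx (@ext_mx R _ _ (fun a b => ext T (r + a)%N (r + b)%N)).
  case: (ltnP a r) => har; case: (ltnP b r) => hbr /=.
  - by [].
  - case: (ltnP b n) => hbn; last by rewrite ext_outr.
    by apply: hoff; rewrite (hbef a har) neq_lt haft.
  - case: (ltnP a n) => han; last by rewrite ext_outl.
    by apply: hoff; rewrite (hbef b hbr) neq_lt haft // orbT.
  - rewrite !subnKC //; case: ifP => // h.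
    move/negbT: h; rewrite negb_and -!leqNgt => /orP [h|h].
      by rewrite ext_outl //; lia.
    by rewrite ext_outr //; lia.
have hTeq : T = castmx (e1, e1) (block_mx T1 0 0 T2).
  by apply: ext_inj; rewrite ext_castmx ext_dblock.
have hN : ext (T *m T) = dblk r (ext (T1 *m T1)) (ext (T2 *m T2)).
  rewrite {1 2}hTeq castmx_mul mulmx_block !mulmx0 !mul0mx !addr0 !add0r.
  by rewrite ext_castmx ext_dblock.
have hT2skew : T2^T = - T2.
  apply: ext_inj; apply: functional_extensionality => a; apply: functional_extensionality => b.
  rewrite /T1 /T2 ext_tr extN ?(@ext_mx R _ _ (fun a b => ext T (r + a)%N (r + b)%N)) ?ext_mx andbC; case: ifP => _; last by rewrite oppr0.
  by rewrite hskew.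
have hT1skew : T1^T = - T1.
  apply: ext_inj; apply: functional_extensionality => a; apply: functional_extensionality => b.
  rewrite /T1 /T2 ext_tr extN ?(@ext_mx R _ _ (fun a b => ext T (r + a)%N (r + b)%N)) ?ext_mx andbC; case: ifP => _; last by rewrite oppr0.
  by rewrite hskew.
have hT2sq : forall a b, ext (T2 *m T2) a b = ext (T *m T) (r + a) (r + b).
  by move=> a b; rewrite hN /dblk !ltnNge !leq_addr /= !addKn.
have hT2diag : is_diag_mx (T2 *m T2).
  apply/is_diag_mxP => i j hij; rewrite -extE hT2sq; apply: hND.
  by rewrite eqn_add2l.
have hT2mono : forall a b, (a <= b)%N -> (b < n - r)%N ->
    ext (T2 *m T2) a a <= ext (T2 *m T2) b b.
  by move=> a b hab hb; rewrite !hT2sq; apply: hmono; lia.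
have hlt : (n - r < n)%N by lia.
have [k2 [m2 [w2 [A2 [z2 [e2 [hg2 [hw2 hT2e]]]]]]]] :=
  IH (n - r)%N hlt T2 hT2skew hT2diag hT2mono.
have [hm2 [hwp2 [hwi2 hA2]]] := hg2.
have hT1sq : T1 *m T1 = (ext (T *m T) 0 0)%:M.
  apply/matrixP => i j; rewrite -extE.
  have -> : ext (T1 *m T1) i j = ext (T *m T) i j by rewrite hN /dblk !ltn_ord.
  rewrite mxE; case: (eqVneq i j) => [<-|hij].
    by rewrite mulr1n (hbef i (ltn_ord i)).
  by rewrite mulr0n hND.
pose c := - ext (T *m T) 0 0.
pose w0 := Num.sqrt c.
have hw0 : 0 < w0 by rewrite sqrtr_gt0.
have hw0sq : w0 ^+ 2 = c by rewrite sqr_sqrtr // ltW.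
pose A1 := w0^-1 *: T1.
have hA1T : A1^T = - A1 by rewrite /A1 linearZ /= hT1skew scalerN.
have hA1sq : A1 *m A1 = - (1%:M).
  rewrite /A1 -scalemxAl -scalemxAr scalerA hT1sq scale_scalar_mx.
  have -> : ext (T *m T) 0 0 = - w0 ^+ 2 by rewrite hw0sq opprK.
  rewrite (_ : w0^-1 * w0^-1 * - w0 ^+ 2 = - 1); first by rewrite raddfN.
  by field; rewrite lt0r_neq0.
have [hso1 hev] := skew_sqN1 hA1T hA1sq.
have e0 : r = (r./2).*2 by rewrite -{1}(odd_double_half r) (negbTE hev).
pose A0 := castmx (e0, e0) A1.
have hw2lt : forall j, w2 j ^+ 2 < c.
  move=> j; have [a [han hwa]] := hw2 j.
  rewrite hT2sq in hwa.
  have hh := haft (r + a)%N (leq_addr _ _) ltac:(lia).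
  rewrite -hwa in hh; rewrite /c; lra.
have hS : (\sum_(i < k2.+1) (ocons (r./2) m2 i).*2 = r + \sum_(i < k2) (m2 i).*2)%N.
  rewrite big_ord_recl ocons0 -e0; congr addn; apply: eq_bigr => i _; by rewrite oconsS.
have e : (\sum_(i < k2.+1) (ocons (r./2) m2 i).*2 + z2)%N = n by rewrite hS -addnA e2 e1.
exists k2.+1, (ocons (r./2) m2), (ocons w0 w2),
  (fun i => \matrix_(a < (ocons (r./2) m2 i).*2, b < (ocons (r./2) m2 i).*2)
             ocons (ext A0) (fun j => ext (A2 j)) i a b), z2, e.
split.
  split.
    move=> i; case: (unliftP ord0 i) => [j|] ->; rewrite ?oconsS ?ocons0 //.
    rewrite lt0n; apply/eqP => h; move: hr0; by rewrite e0 h.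
  split.
    by move=> i; case: (unliftP ord0 i) => [j|] ->; rewrite ?oconsS ?ocons0.
  split.
    move=> i j; case: (unliftP ord0 i) => [i'|] ->; case: (unliftP ord0 j) => [j'|] ->;
      rewrite ?oconsS ?ocons0 //.
    - by move/hwi2 => ->.
    - by move=> h; have := hw2lt i'; rewrite h -hw0sq ltxx.
    - by move=> h; have := hw2lt j'; rewrite -h -hw0sq ltxx.
  move=> i; case: (unliftP ord0 i) => [j|] -> /=.
    rewrite !oconsS /= (mx_ext_cast (erefl _)) castmx_id.
    exact: hA2.
  rewrite !ocons0 (mx_ext_cast (erefl _)) castmx_id /A0.
  by split; [apply: skew_castmx | apply: so_castmx].
split.
  move=> i; case: (unliftP ord0 i) => [j|] ->.
    have [a [han hwa]] := hw2 j; exists (r + a)%N; split; first by lia.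
    by rewrite oconsS hwa hT2sq.
  by exists 0%N; rewrite ocons0 hw0sq /c opprK.
apply: ext_inj; rewrite ext_block_form ext_mxdiag_recl hTblk hT2e ext_block_form.
have h0 : ext (ocons w0 w2 ord0 *:
     \matrix_(a < (ocons (r./2) m2 ord0).*2, b < (ocons (r./2) m2 ord0).*2)
        ocons (ext A0) (fun j : 'I_k2 => ext (A2 j)) ord0 a b) = ext T1.
  apply: functional_extensionality => a; apply: functional_extensionality => b.
  rewrite (extZ (R := R)) ocons0 (@ext_mx R _ _ (fun a b => ocons (ext A0) (fun j => ext (A2 j)) ord0 a b)).
  rewrite !ocons0 /A0 ext_castmx /A1 (extZ (R := R)) -e0.
  case: ifP => h; first by rewrite mulrA mulfV ?mul1r // lt0r_neq0.
  rewrite mulr0; move/negbT: h; rewrite negb_and -!leqNgt => /orP [h|h].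
    by rewrite ext_outl.
  by rewrite ext_outr.
have hrest : ext (\mxdiag_i (ocons w0 w2 (lift ord0 i) *:
     \matrix_(a < (ocons (r./2) m2 (lift ord0 i)).*2, b < (ocons (r./2) m2 (lift ord0 i)).*2)
        ocons (ext A0) (fun j : 'I_k2 => ext (A2 j)) (lift ord0 i) a b))
     = ext (\mxdiag_i (w2 i *: A2 i)).
  apply: ext_mxdiag_eq => i; first by rewrite oconsS.
  apply: functional_extensionality => a; apply: functional_extensionality => b.
  rewrite !(extZ (R := R)) oconsS (@ext_mx R _ _ (fun a b => ocons (ext A0) (fun j => ext (A2 j)) (lift ord0 i) a b)).
  rewrite !oconsS; congr (_ * _).
  case: ifP => // h; move/negbT: h; rewrite negb_and -!leqNgt => /orP [h|h].
    by rewrite ext_outl.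
  by rewrite ext_outr.
rewrite h0 hrest hS ocons0 -e0.
by rewrite dblkA.
Qed.

End Core.

Section Block.
Variable R : realType.

Lemma mxdiag_mul k (p : 'I_k -> nat) (B C : forall i, 'M[R]_(p i)) :
  \mxdiag_i B i *m \mxdiag_i C i = \mxdiag_i (B i *m C i).
Proof.
elim: k p B C => [|k IH] p B C.
  apply/matrixP => i; case: i => a ha; exfalso; move: ha; by rewrite big_ord0.
rewrite !mxdiag_recl castmx_mul mulmx_block !mulmx0 !mul0mx !addr0 !add0r.
by rewrite IH.
Qed.

Lemma castmx_add p q (e : p = q) (X Y : 'M[R]_p) :
  castmx (e,e) X + castmx (e,e) Y = castmx (e,e) (X + Y).
Proof. by case: q / e; rewrite !castmx_id. Qed.

Lemma castmx_scalar p q (e : p = q) (c : R) : castmx (e,e) (c%:M) = c%:M.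
Proof. by case: q / e; rewrite castmx_id. Qed.

Lemma rank_castmx p q (e : p = q) (X : 'M[R]_p) : \rank (castmx (e,e) X) = \rank X.
Proof. by case: q / e; rewrite castmx_id. Qed.

Lemma diag_castmx p q (e : p = q) (X : 'M[R]_p) : is_diag_mx X -> is_diag_mx (castmx (e,e) X).
Proof. by case: q / e; rewrite castmx_id. Qed.

Lemma rank_scalar p (c : R) : \rank (c%:M : 'M[R]_p) = if c == 0 then 0%N else p.
Proof.
case: eqP => [->|/eqP h]; first by rewrite raddf0 mxrank0.
by rewrite -scalemx1 mxrank_scale_nz // mxrank1.
Qed.

Lemma skew_orth_sq p (A : 'M[R]_p) : skew_mx A -> special_orthogonal A -> A *m A = - (1%:M).
Proof.
move=> hT [ho _]; move: ho; rewrite /orthogonal_mx hT mulNmx => h.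
by rewrite -h opprK.
Qed.

Lemma block_form_sq n k (m : 'I_k -> nat) (w : 'I_k -> R)
  (A : forall i, 'M[R]_((m i).*2)) z (e : (\sum_(i < k) (m i).*2 + z)%N = n) :
  (forall i, skew_mx (A i) /\ special_orthogonal (A i)) ->
  block_form w A e *m block_form w A e =
  castmx (e,e) (block_mx (\mxdiag_i ((- w i ^+ 2)%:M)) 0 0 (0 : 'M[R]_z)).
Proof.
move=> hA; rewrite /block_form castmx_mul mulmx_block !mulmx0 !mul0mx ?addr0 ?add0r ?mulmx0.
rewrite mxdiag_mul; congr (castmx _ (block_mx _ _ _ _)); apply: eq_mxdiag => i.
have [h1 h2] := hA i.
rewrite -scalemxAl -scalemxAr scalerA skew_orth_sq // scalerN -expr2.
by rewrite scalemx1 raddfN.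
Qed.

Lemma diag_block_sq n k (m : 'I_k -> nat) (w : 'I_k -> R) z
  (e : (\sum_(i < k) (m i).*2 + z)%N = n) :
  is_diag_mx (castmx (e,e) (block_mx (\mxdiag_i ((- w i ^+ 2)%:M : 'M[R]_((m i).*2))) 0 0 (0 : 'M[R]_z))).
Proof.
apply: diag_castmx; rewrite is_diag_block_mx // !eqxx /= mx0_is_diag andbT.
rewrite (eq_mxdiag (B'_ := fun i => diag_mx (const_mx (- w i ^+ 2) : 'rV[R]_((m i).*2)))).
  by rewrite -diag_mxrow diag_mx_is_diag.
by move=> i; rewrite diag_const_mx.
Qed.

Lemma diag_comm n (X Y : 'M[R]_n) : is_diag_mx X -> is_diag_mx Y -> X *m Y = Y *m X.
Proof.
move=> hX hY; apply/matrixP => i j; rewrite mulmx_diagr // mulmx_diagl //.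
case: (eqVneq i j) => [->|hij]; first by rewrite mulrC.
by move/is_diag_mxP: hX => hX; rewrite hX ?mulr0 ?mul0r.
Qed.

End Block.

Section Spectral.
Variable R : realType.

Lemma conj_entry n (P0 X : 'M[R]_n) (u : 'I_n -> 'rV[R]_n) :
  (forall a i, P0 a i = u i 0 a) ->
  forall i j, (P0^T *m X *m P0) i j = (u i *m X *m (u j)^T) 0 0.
Proof.
move=> hP i j; rewrite !mxE; apply: eq_bigr => b _; rewrite !mxE hP; congr (_ * _).
by apply: eq_bigr => a _; rewrite !mxE hP.
Qed.

Lemma eigbasis n (J : 'M[R]_n) : J^T = J ->
  (exists d : 'I_n -> R, injective d /\ forall i, eigenvalue J (d i)) ->
  exists P0 : 'M[R]_n, P0^T *m P0 = 1%:M /\ is_diag_mx (P0^T *m J *m P0) /\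
    (forall i j : 'I_n, i != j -> (P0^T *m J *m P0) i i != (P0^T *m J *m P0) j j).
Proof.
move=> hJ [d [dinj hd]].
have [v hv] : exists v : 'I_n -> 'rV[R]_n, forall i, v i *m J = d i *: v i /\ v i != 0.
  apply: (fin_all_exists (P := fun i x => x *m J = d i *: x /\ x != 0)) => i.
  by have /eigenvalueP [x hx hx0] := hd i; exists x.
have hvJ : forall i j, v i *m J *m (v j)^T = d j *: (v i *m (v j)^T).
  move=> i j; rewrite -mulmxA -[J]hJ -trmx_mul (proj1 (hv j)) linearZ /=.
  by rewrite -scalemxAr.
have horth : forall i j, i != j -> v i *m (v j)^T = 0.
  move=> i j hij; have := hvJ i j; rewrite (proj1 (hv i)) -scalemxAl => /eqP.
  rewrite -subr_eq0 -scalerBl scalemx_eq0 subr_eq0 => /orP [/eqP h|/eqP //].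
  by move: hij; rewrite (dinj _ _ h) eqxx.
pose s i := (v i *m (v i)^T) 0 0.
have hs2 : forall i, s i = \sum_l v i 0 l ^+ 2.
  by move=> i; rewrite /s mxE; apply: eq_bigr => l _; rewrite mxE expr2.
have hs : forall i, 0 < s i.
  move=> i; rewrite hs2 lt_def; apply/andP; split; last first.
    by apply: sumr_ge0 => l _; rewrite sqr_ge0.
  apply/eqP => h.
  have h' := psumr_eq0P (P := predT) (fun l _ => sqr_ge0 (v i 0 l)) h.
  have [_ /eqP hne] := hv i; apply: hne; apply/matrixP => a l.
  rewrite [a]ord1 mxE; apply/eqP; rewrite -sqrf_eq0; apply/eqP; exact: h'.
pose c i := (Num.sqrt (s i))^-1.
pose u i := c i *: v i.
have hc2 : forall i, c i * c i * s i = 1.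
  move=> i; rewrite /c -expr2 exprVn sqr_sqrtr ?ltW // mulVf //.
  by rewrite lt0r_neq0.
have huu : forall i j, (u i *m (u j)^T) 0 0 = (i == j)%:R.
  move=> i j; rewrite /u linearZ /= -scalemxAl -scalemxAr scalerA.
  case: (eqVneq i j) => [<-|hij]; last by rewrite horth // scaler0 mxE.
  by rewrite mxE -/(s i) hc2.
have huJ : forall i, u i *m J = d i *: u i.
  by move=> i; rewrite /u -scalemxAl (proj1 (hv i)) !scalerA mulrC.
pose P0 := \matrix_(a < n, i < n) u i 0 a.
have hP0 : forall a i, P0 a i = u i 0 a by move=> a i; rewrite mxE.
have hPJ : forall i j, (P0^T *m J *m P0) i j = d i * (i == j)%:R.
  by move=> i j; rewrite (conj_entry _ hP0) huJ -scalemxAl mxE huu.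
exists P0; split.
  apply/matrixP => i j; rewrite -[P0^T]mulmx1 (conj_entry _ hP0) mulmx1 huu mxE.
  by case: eqP.
split.
  apply/is_diag_mxP => i j hij; rewrite hPJ.
  by rewrite (_ : (i == j) = false) ?mulr0 //; exact: (negbTE hij). 
move=> i j hij; rewrite !hPJ !eqxx !mulr1.
by apply/eqP => /dinj /eqP; rewrite (negbTE hij).
Qed.

End Spectral.

Section Main.
Variable R : realType.

Lemma sort_perm n (f : 'I_n -> R) :
  exists s : 'S_n, forall a b : 'I_n, (a <= b)%N -> f (s a) <= f (s b).
Proof.
case: n f => [|n] f; first by exists 1%g => a; case: a.
pose s0 := sort (fun i j : 'I_n.+1 => f i <= f j) (enum 'I_n.+1).
have hsz : size s0 = n.+1 by rewrite size_sort size_enum_ord.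
have hu : uniq s0 by rewrite sort_uniq enum_uniq.
pose t (a : 'I_n.+1) := nth ord0 s0 a.
have tinj : injective t.
  move=> a b /eqP; rewrite /t nth_uniq ?hsz // => /eqP; exact: val_inj.
exists (perm tinj) => a b hab; rewrite !permE /t.
have hsort : sorted (fun i j : 'I_n.+1 => f i <= f j) s0.
  by apply: sort_sorted => x y; apply: le_total.
have htr : transitive (fun i j : 'I_n.+1 => f i <= f j).
  by move=> x y z; apply: le_trans.
have hrefl : reflexive (fun i j : 'I_n.+1 => f i <= f j) by move=> x; apply: lexx.
have := sorted_leq_nth htr hrefl ord0 hsort.
by apply; rewrite ?inE ?hsz.
Qed.

Lemma conj_perm n (s : 'S_n) (Y : 'M[R]_n) :
  (perm_mx s^-1)^T *m Y *m perm_mx s^-1 = \matrix_(i, j) Y (s i) (s j).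
Proof.
rewrite tr_perm_mx invgK -row_permE -col_permE.
by apply/matrixP => i j; rewrite !mxE.
Qed.

Lemma perm_orth n (s : 'S_n) : (perm_mx s)^T *m perm_mx s = 1%:M :> 'M[R]_n.
Proof. by rewrite tr_perm_mx -perm_mxM mulVg perm_mx1. Qed.

Lemma lie_id n (J M Om : 'M[R]_n) : Om *m J + J *m Om = M ->
  lie_bracket M Om = J *m (Om *m Om) - (Om *m Om) *m J.
Proof.
move=> <-; rewrite /lie_bracket mulmxDl mulmxDr !mulmxA.
have key : forall x y z : 'M[R]_n, x + y - (z + x) = y - z.
  by move=> x y z; rewrite (addrC x y) (addrC z x) addrKA.
exact: key.
Qed.

Lemma orthC n (P : 'M[R]_n) : P^T *m P = 1%:M -> P *m P^T = 1%:M.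
Proof. exact: mulmx1C. Qed.

Lemma conj_mul n (P X Y : 'M[R]_n) : P^T *m P = 1%:M ->
  P^T *m (X *m Y) *m P = (P^T *m X *m P) *m (P^T *m Y *m P).
Proof.
move=> h; have h' := orthC h.
by rewrite !mulmxA -[P^T *m X *m P *m P^T]mulmxA h' mulmx1.
Qed.

Lemma existence n (J Om : 'M[R]_n) : J^T = J ->
  (exists d : 'I_n -> R, injective d /\ forall i, eigenvalue J (d i)) ->
  Om^T = - Om -> J *m (Om *m Om) = (Om *m Om) *m J ->
  exists k (m : 'I_k -> nat) (w : 'I_k -> R), normal_form J Om m w.
Proof.
move=> hJ hd hOm hcomm.
have [P0 [hP0 [hD0 hD0d]]] := eigbasis hJ hd.
pose D := P0^T *m J *m P0.
pose T0 := P0^T *m Om *m P0.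
have hT0sq : T0 *m T0 = P0^T *m (Om *m Om) *m P0 by rewrite conj_mul.
have hT0diag : is_diag_mx (T0 *m T0).
  apply/is_diag_mxP => i j hij.
  have hc : (T0 *m T0) *m D = D *m (T0 *m T0).
    by rewrite /D hT0sq -!conj_mul // hcomm.
  have := congr1 (fun M : 'M[R]_n => M i j) hc.
  rewrite /= (mulmx_diagr _ _ _ hD0) (mulmx_diagl _ _ _ hD0) => h.
  have : (T0 *m T0) i j * (D j j - D i i) = 0 by rewrite mulrBr h mulrC subrr.
  move/eqP; rewrite mulf_eq0 subr_eq0 => /orP [/eqP //|/eqP h2].
  by exfalso; move: (hD0d j i); rewrite eq_sym hij h2 eqxx => /(_ isT).
have [s hs] := sort_perm (fun i => (T0 *m T0) i i).
pose Q := perm_mx (s^-1)%g : 'M[R]_n.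
pose P := P0 *m Q.
have hQ : Q^T *m Q = 1%:M by apply: perm_orth.
have hP : P^T *m P = 1%:M.
  by rewrite /P trmx_mul !mulmxA -[Q^T *m P0^T *m P0]mulmxA hP0 mulmx1.
have hconjP : forall X, P^T *m X *m P = \matrix_(i, j) (P0^T *m X *m P0) (s i) (s j).
  by move=> X; rewrite -conj_perm /P trmx_mul !mulmxA.
pose T := P^T *m Om *m P.
have hTT : T^T = - T.
  by rewrite /T !trmx_mul !trmxK hOm mulNmx mulmxN !mulmxA.
have hTsq : T *m T = \matrix_(i, j) (T0 *m T0) (s i) (s j).
  by rewrite /T -conj_mul // hconjP hT0sq.
have hTdiag : is_diag_mx (T *m T).
  apply/is_diag_mxP => i j hij; rewrite hTsq mxE.
  move/is_diag_mxP: hT0diag; apply.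
  by apply/negP => /eqP /val_inj /perm_inj h; move: hij; rewrite h eqxx.
have hmono : forall a b, (a <= b)%N -> (b < n)%N -> ext (T *m T) a a <= ext (T *m T) b b.
  move=> a b hab hb; have ha : (a < n)%N by apply: leq_ltn_trans hab hb.
  rewrite -[a]/(nat_of_ord (Ordinal ha)) -[b]/(nat_of_ord (Ordinal hb)) !extE hTsq.
  by move: (hs (Ordinal ha) (Ordinal hb) hab); rewrite !mxE.
have [k [m [w [A [z [e [[hm [hw [hinj hA]]] [_ hTe]]]]]]]] := Eprime hTT hTdiag hmono.
exists k, m, w, A, z, e, P.
do !split => //.
rewrite hconjP; apply/is_diag_mxP => i j hij; rewrite mxE.
move/is_diag_mxP: hD0; apply.
by apply/negP => /eqP /val_inj /perm_inj h; move: hij; rewrite h eqxx.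
Qed.

End Main.

Section Final.
Variable R : realType.

Lemma conj_inj n (P X Y : 'M[R]_n) : P^T *m P = 1%:M ->
  P^T *m X *m P = P^T *m Y *m P -> X = Y.
Proof.
move=> hP h; have hPP := orthC hP.
have hX : forall Z : 'M[R]_n, P *m (P^T *m Z *m P) *m P^T = Z.
  by move=> Z; rewrite !mulmxA hPP mul1mx -mulmxA hPP mulmx1.
by rewrite -(hX X) h hX.
Qed.

Lemma converse n (J Om : 'M[R]_n) k (m : 'I_k -> nat) (w : 'I_k -> R) :
  normal_form J Om m w -> J *m (Om *m Om) = (Om *m Om) *m J.
Proof.
case=> A [z [e [P [hP [hD [hm [hw [hinj [hA hB]]]]]]]]].
have hB2 : is_diag_mx (P^T *m (Om *m Om) *m P).
  by rewrite conj_mul // hB block_form_sq // diag_block_sq.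
have key := diag_comm hD hB2.
rewrite -!conj_mul // in key.
exact: conj_inj hP key.
Qed.

Definition cnt k (m : 'I_k -> nat) (w : 'I_k -> R) (x : R) : nat :=
  (\sum_(i < k) if w i == x then (m i).*2 else 0)%N.

Lemma rank_scalar2 p (a b : R) :
  \rank (a%:M + b%:M : 'M[R]_p)%R = if a + b == 0 then 0%N else p.
Proof. by rewrite -raddfD rank_scalar. Qed.

Lemma rank_count n (J Om : 'M[R]_n) k (m : 'I_k -> nat) (w : 'I_k -> R) :
  normal_form J Om m w -> forall x, 0 < x ->
  (\rank (Om *m Om + (x ^+ 2)%:M)%R + cnt m w x)%N = n.
Proof.
case=> A [z [e [P [hP [hD [hm [hw [hinj [hA hB]]]]]]]]] x hx.
have hPP := orthC hP.
have [hPTu hPu] := mulmx1_unit hP.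
have hrk : forall Y : 'M[R]_n, \rank (P^T *m Y *m P) = \rank Y.
  move=> Y; rewrite mxrankMfree ?row_free_unit //.
  by rewrite -mxrank_tr trmx_mul mxrankMfree ?row_free_unit ?unitmx_tr // mxrank_tr.
rewrite -hrk mulmxDr mulmxDl conj_mul // hB block_form_sq //.
rewrite mul_mx_scalar -scalemxAl hP scalemx1.
rewrite -(castmx_scalar e) scalar_mx_block -mxdiagZ castmx_add add_block_mx.
rewrite !addr0 add0r -mxdiagD rank_castmx rank_diag_block_mx rank_mxdiag rank_scalar.
have -> : (x ^+ 2 == 0) = false by rewrite sqrf_eq0 gt_eqF.
rewrite /cnt -addnA [(z + _)%N]addnC addnA -big_split /= -[RHS]e; congr addn.
apply: eq_bigr => i _; rewrite rank_scalar2 addrC subr_eq0 eqrXn2 ?ltW // eq_sym.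
by case: (w i == x); rewrite ?addn0 ?add0n.
Qed.

Lemma cnt_at k (m : 'I_k -> nat) (w : 'I_k -> R) i : injective w -> cnt m w (w i) = (m i).*2.
Proof.
move=> hinj; rewrite /cnt (bigD1 i) //= eqxx big1 ?addn0 // => j hj.
by case: eqP => // /hinj h; move: hj; rewrite h eqxx.
Qed.

Lemma nf_pos n (J Om : 'M[R]_n) k (m : 'I_k -> nat) (w : 'I_k -> R) :
  normal_form J Om m w -> (forall i, 0 < w i) /\ injective w /\ (forall i, 0 < m i)%N.
Proof. by case=> A [z [e [P [hP [hD [hm [hw [hinj [hA hB]]]]]]]]]. Qed.

Lemma match_fun n (J Om : 'M[R]_n) k (m : 'I_k -> nat) (w : 'I_k -> R)
  k' (m' : 'I_k' -> nat) (w' : 'I_k' -> R) :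
  normal_form J Om m w -> normal_form J Om m' w' ->
  exists sigma : 'I_k -> 'I_k', forall i, w' (sigma i) = w i /\ m' (sigma i) = m i.
Proof.
move=> h1 h2.
have [hw1 [hi1 hm1]] := nf_pos h1.
have [hw2 [hi2 hm2]] := nf_pos h2.
apply: (fin_all_exists (P := fun i j => w' j = w i /\ m' j = m i)) => i.
have hc : cnt m' w' (w i) = (m i).*2.
  have e1 := rank_count h1 (hw1 i); have e2 := rank_count h2 (hw1 i).
  rewrite cnt_at // in e1.
  by apply/eqP; rewrite -(eqn_add2l (\rank (Om *m Om + (w i ^+ 2)%:M)%R)) e1 e2.
case: (pickP (fun j => w' j == w i)) => [j /eqP hj|hn].
  exists j; split => //; apply: double_inj; by rewrite -hc -hj cnt_at.
exfalso; move: hc; rewrite /cnt big1 => [h|j _]; last by rewrite hn.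
by move: (hm1 i); rewrite -double_gt0 -h.
Qed.

End Final.

Unset Implicit Arguments.

Theorem theorem1 (R : realType) (n : nat) (J M Om : 'M[R]_n) :
  symmetric_mx J -> distinct_eigenvalues J ->
  skew_mx M -> skew_mx Om -> Om *m J + J *m Om = M ->
  (lie_bracket M Om = 0 <->
     exists (k : nat) (m : 'I_k -> nat) (w : 'I_k -> R), normal_form J Om m w)
  /\
  (forall (k : nat) (m : 'I_k -> nat) (w : 'I_k -> R)
          (k' : nat) (m' : 'I_k' -> nat) (w' : 'I_k' -> R),
      normal_form J Om m w -> normal_form J Om m' w' ->
      exists sigma : 'I_k -> 'I_k',
        bijective sigma /\ forall i, m' (sigma i) = m i /\ w' (sigma i) = w i).
Proof.
move=> hJ hd hM hOm hMdef.
split.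
  rewrite (lie_id hMdef); split.
    move=> h; apply: existence => //; by apply/eqP; rewrite -subr_eq0 h.
  by move=> [k [m [w hnf]]]; rewrite (converse hnf) subrr.
move=> k m w k' m' w' h1 h2.
have [sigma hs] := match_fun h1 h2.
have [tau ht] := match_fun h2 h1.
have [_ [hi1 _]] := nf_pos h1.
have [_ [hi2 _]] := nf_pos h2.
exists sigma; split; last by move=> i; have [a b] := hs i; split.
exists tau.
  by move=> i; apply: hi1; rewrite (proj1 (ht _)) (proj1 (hs _)).
by move=> j; apply: hi2; rewrite (proj1 (hs _)) (proj1 (ht _)).
Qed.
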